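(* Let $m\ge2$, let $C_1,\dots,C_m$ be real full-row-rank matrices with $n$ columns, $P_i=C_i'(C_iC_i')^{-1}C_i$, and let $M$ be the $mn\times mn$ matrix of the map $(x_1,\dots,x_m)\mapsto\big(x_i-\tfrac12P_i(x_i-x_{i-1})\big)_{i=1}^m$ with $x_0:=x_m$. Suppose that for all $x_1,\dots,x_m\in\mathbb R^n$, $C_ix_i=C_ix_{i-1}$ for all $i$ implies $x_1=\cdots=x_m$ (well-configuredness of the directed cycle $1\to\cdots\to m\to1$). Then the eigenvalue $1$ of $M$ has algebraic multiplicity exactly $n$ (equal to its geometric multiplicity).
   Context: $'$ denotes transpose; $P_i$ is the orthogonal projection onto $(\ker C_i)^\perp$. *)

(* Defs.v *)
From HB Require Import structures.
From mathcomp Require Import all_boot all_order all_algebra.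
Set Implicit Arguments. Unset Strict Implicit. Unset Printing Implicit Defensive.
Import Order.TTheory GRing.Theory Num.Theory.
Local Open Scope ring_scope.

(* Blocks are indexed by i : 'I_m (0-based); the predecessor of block i on the
   cycle is ord_pred i, i.e. (i-1) mod m, so block 0's predecessor is block m-1
   (this encodes x_0 := x_m). *)

Definition projC (R : realFieldType) (r n : nat) (C : 'M[R]_(r, n)) : 'M[R]_n :=
  C^T *m invmx (C *m C^T) *m C.

(* The map (x_1..x_m) |-> (x_i - 1/2 P_i (x_i - x_{i-1}))_i, where the tuple is
   stored as X : 'M_(m, n) whose i-th row is x_i^T. *)
Definition cycmap (R : realFieldType) (m n : nat) (r : 'I_m -> nat)
  (C : forall i, 'M[R]_(r i, n)) (X : 'M[R]_(m, n)) : 'M[R]_(m, n) :=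
  \matrix_(i, k) (row i X - 2^-1 *: ((row i X - row (ord_pred i) X) *m (projC (C i))^T)) 0 k.

(* The mn x mn matrix of that map on stacked column vectors (x_1;...;x_m):
   mxvec stacks the rows of X, i.e. the vectors x_1, ..., x_m in order.
   lin1_mx g is the matrix with u *m lin1_mx g = g u (row vectors), so its
   transpose is the matrix acting on column vectors. *)
Definition cycM (R : realFieldType) (m n : nat) (r : 'I_m -> nat)
  (C : forall i, 'M[R]_(r i, n)) : 'M[R]_(m * n) :=
  (lin1_mx (fun v : 'rV[R]_(m * n) => mxvec (cycmap C (vec_mx v))))^T.

Definition well_configured (R : realFieldType) (m n : nat) (r : 'I_m -> nat)
  (C : forall i, 'M[R]_(r i, n)) : Prop :=
  forall x : 'I_m -> 'cV[R]_n,
    (forall i, C i *m x i = C i *m x (ord_pred i)) -> forall i j, x i = x j.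

(* Main.v *)
Require Import Defs.
From HB Require Import structures.
From mathcomp Require Import all_boot all_order all_algebra.
Import Order.TTheory GRing.Theory Num.Theory.
Local Open Scope ring_scope.
Set Implicit Arguments. Unset Strict Implicit. Unset Printing Implicit Defensive.

Lemma char_poly_conj (F : fieldType) N (P A : 'M[F]_N) : P \in unitmx ->
  char_poly (P *m A *m invmx P) = char_poly A.
Proof.
move=> uP; rewrite /char_poly /char_poly_mx.
have -> : 'X%:M - map_mx polyC (P *m A *m invmx P) =
   map_mx polyC P *m ('X%:M - map_mx polyC A) *m map_mx polyC (invmx P).
  rewrite !map_mxM mulmxBr mulmxBl mul_mx_scalar -scalemxAl.
  have -> : map_mx polyC P *m map_mx polyC (invmx P) = 1%:M.
    by rewrite -(map_mxM polyC) mulmxV // (map_mx1 polyC).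
  by rewrite scalemx1.
rewrite !det_mulmx mulrAC -det_mulmx -(map_mxM polyC) mulmxV //.
by rewrite (map_mx1 polyC) det1 mul1r.
Qed.

Lemma char_poly_tr (F : fieldType) N (A : 'M[F]_N) : char_poly A^T = char_poly A.
Proof.
rewrite /char_poly -[RHS]det_tr /char_poly_mx.
by rewrite (raddfB (@trmx _ N N)) /= tr_scalar_mx map_trmx.
Qed.

Lemma char_poly_scalar (F : fieldType) k (a : F) :
  char_poly (a%:M : 'M_k) = ('X - a%:P) ^+ k.
Proof.
rewrite char_poly_trig ?scalar_mx_is_trig //.
rewrite (eq_bigr (fun _ => 'X - a%:P)); last by move=> i _; rewrite mxE eqxx.
by rewrite prodr_const card_ord.
Qed.

Lemma genG (F : fieldType) N (A : 'M[F]_N) (a : F) k :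
  \rank (kermx (A - a%:M)) = k ->
  (forall u : 'rV_N, u *m (A - a%:M) *m (A - a%:M) = 0 -> u *m (A - a%:M) = 0) ->
  mup a (char_poly A) = k.
Proof.
move=> rK H2.
have hk : (k <= N)%N by rewrite -rK rank_leq_col.
have [q eN] : exists q, N = (k + q)%N by exists (N - k)%N; rewrite subnKC.
subst N.
set B := A - a%:M in rK H2 *.
have rB : \rank B = q.
  by move: rK; rewrite mxrank_ker => h; apply/eqP; rewrite -(eqn_add2l k) -[X in (X + _)%N]h subnK ?rank_leq_col.
have [E hE] : exists E : 'M_(k, k + q), (E :=: kermx B)%MS.
  move: (row_base (kermx B)) (eq_row_base (kermx B)); rewrite rK => E hE.
  by exists E.
have [G hG] : exists G : 'M_(q, k + q), (G :=: B)%MS.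
  move: (row_base B) (eq_row_base B); rewrite rB => G hG.
  by exists G.
have H2m : forall p (U : 'M_(p, k + q)), U *m B *m B = 0 -> U *m B = 0.
  move=> p U hU; apply/row_matrixP => i; rewrite row0 !row_mul H2 //.
  by rewrite -!row_mul hU row0.
have disj : forall p (W : 'M_(p, k + q)), (W <= kermx B)%MS -> (W <= B)%MS -> W = 0.
  move=> p W /sub_kermxP WB /submxP [U defW].
  by rewrite defW H2m // -defW.
have EB : E *m B = 0 by apply/sub_kermxP; rewrite hE.
have GB : (G <= B)%MS by rewrite hG.
have rE : \rank E = k by rewrite hE.
have rG : \rank G = q by rewrite hG.
set P := col_mx E G.
have uP : P \in unitmx.
  rewrite -row_full_unit /row_full.
  have := mxrank_sum_cap E G.
  have -> : (E :&: G)%MS = 0.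
    apply: disj; first by rewrite -hE capmxSl.
    by rewrite -hG capmxSr.
  by rewrite mxrank0 addn0 rE rG -(addsmxE E G) => ->.
have GA : (G *m A <= G)%MS.
  rewrite hG (submx_trans (submxMr A GB)) //.
  have -> : B *m A = A *m B by rewrite /B mulmxBl mulmxBr scalar_mxC.
  exact: submxMl.
set A2 := G *m A *m pinvmx G.
have PA : P *m A = block_mx a%:M 0 0 A2 *m P.
  rewrite /P mul_col_mx mul_block_col !mul0mx addr0 add0r mul_scalar_mx.
  rewrite /A2 mulmxKpV //; congr col_mx.
  by move/eqP: EB; rewrite /B mulmxBr subr_eq0 mul_mx_scalar => /eqP.
have cA : char_poly A = ('X - a%:P) ^+ k * char_poly A2.
  rewrite -(char_poly_conj A uP) PA mulmxK //.
  rewrite /char_poly char_block_diag_mx det_ublock; congr (_ * _).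
  exact: char_poly_scalar.
rewrite cA mupMl ?mup_XsubCX ?eqxx //.
rewrite -eigenvalue_root_char; apply/eigenvalueP => -[v vA2 vN0].
have : v *m G = 0.
  apply: disj; last by rewrite (submx_trans (submxMl v G)).
  apply/sub_kermxP; rewrite /B mulmxBr -mulmxA -(mulmxKpV GA) -/A2 mulmxA vA2.
  by rewrite mul_mx_scalar -scalemxAl subrr.
move/eqP; rewrite mulmx_free_eq0 ?(negPf vN0) //.
by rewrite /row_free rG.
Qed.
Lemma lin1P (R : pzRingType) a b (f : 'rV[R]_a -> 'rV[R]_b) : linear f ->
  forall u, u *m lin1_mx f = f u.
Proof.
move=> lin_f u.
pose flM := GRing.isLinear.Build _ _ _ _ f lin_f.
pose fL : {linear _ -> _} := HB.pack f flM.
exact: (mul_rV_lin1 fL u).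
Qed.

Lemma row_freeI (F : fieldType) p q (M : 'M[F]_(p, q)) :
  (forall v : 'rV_p, v *m M = 0 -> v = 0) -> row_free M.
Proof.
move=> H; rewrite -kermx_eq0; apply/eqP/row_matrixP => i; rewrite row0.
by apply: H; rewrite -row_mul mulmx_ker row0.
Qed.

Lemma sq_eq0 (R : realFieldType) n (v : 'rV[R]_n) : v *m v^T = 0 -> v = 0.
Proof.
move=> /matrixP /(_ 0 0); rewrite !mxE => h.
have h2 := psumr_eq0P (fun j _ => (ltac:(by rewrite mxE -expr2 sqr_ge0) : 0 <= v 0 j * v^T j 0)) h.
apply/rowP => j; rewrite mxE.
have := h2 j isT; rewrite mxE => /eqP; rewrite mulf_eq0 orbb => /eqP //.
Qed.

Section Proj.
Variables (R : realFieldType) (r n : nat) (C : 'M[R]_(r, n)).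
Hypothesis hC : row_free C.

Lemma CCt_unit : C *m C^T \in unitmx.
Proof.
rewrite -row_free_unit; apply: row_freeI => v hv.
apply/eqP; rewrite -(mulmx_free_eq0 _ hC); apply/eqP; apply: sq_eq0.
by rewrite trmx_mul mulmxA -(mulmxA v C) hv mul0mx.
Qed.

Lemma projC_sym : (projC C)^T = projC C.
Proof.
by rewrite /projC !trmx_mul trmxK trmx_inv trmx_mul trmxK mulmxA.
Qed.

Lemma C_projC : C *m projC C = C.
Proof. by rewrite /projC !mulmxA mulmxV ?CCt_unit // mul1mx. Qed.

Lemma projC_idem : projC C *m projC C = projC C.
Proof. by rewrite {1}/projC -!mulmxA [X in _ *m (_ *m X)]C_projC mulmxA. Qed.

Lemma projC_ker (d : 'rV[R]_n) : d *m projC C = 0 -> d *m C^T = 0.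
Proof.
move=> h; have : d *m projC C *m C^T = 0 by rewrite h mul0mx.
by rewrite -mulmxA -[X in d *m (X *m _)]projC_sym -trmx_mul C_projC.
Qed.
End Proj.
Section Cyc.
Variables (R : realFieldType) (m n : nat) (r : 'I_m -> nat)
  (C : forall i, 'M[R]_(r i, n)).

Lemma row_cycmap (X : 'M[R]_(m, n)) i :
  row i (cycmap C X) =
  row i X - 2^-1 *: ((row i X - row (ord_pred i) X) *m (projC (C i))^T).
Proof. by apply/rowP => k; rewrite !mxE. Qed.

Lemma row_cycmap' (X : 'M[R]_(m, n)) i :
  row i (cycmap C X) =
  row i X *m (1%:M - 2^-1 *: (projC (C i))^T) + row (ord_pred i) X *m (2^-1 *: (projC (C i))^T).
Proof.
rewrite row_cycmap mulmxBl mulmxBr mulmx1 -!scalemxAr scalerBr opprB.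
by rewrite addrA addrAC.
Qed.

Lemma cycmap_lin : linear (cycmap C).
Proof.
move=> a X Y; apply/row_matrixP => i.
rewrite linearD linearZ /= !row_cycmap' !linearD !linearZ /=.
rewrite !mulmxDl -!scalemxAl !scalerDr.
set x1 := a *: _; set y1 := row i Y *m 1%:M; set x2 := 2^-1 *: (a *: _).
set y2 := 2^-1 *: (row i Y *m _); set x3 := 2^-1 *: (a *: _); set y3 := 2^-1 *: (row _ Y *m _).
rewrite !addrA (addrAC _ y1 x2) -!addrA; congr (_ + (_ + _)).
by rewrite (addrCA y2 x3) (addrCA y1 x3).
Qed.

Definition cycf (v : 'rV[R]_(m * n)) := mxvec (cycmap C (vec_mx v)).

Lemma cycf_lin : linear cycf.
Proof. by move=> a u v; rewrite /cycf !linearP /= cycmap_lin linearP. Qed.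

Lemma uT (u : 'rV[R]_(m * n)) : u *m lin1_mx cycf = cycf u.
Proof. exact: (lin1P cycf_lin). Qed.

Hypothesis hC : forall i, row_free (C i).
Hypothesis wc : well_configured C.

Lemma fixed_rows (X : 'M[R]_(m, n)) : cycmap C X = X -> forall i j, row i X = row j X.
Proof.
move=> hX.
have key : forall i, C i *m (row i X)^T = C i *m (row (ord_pred i) X)^T.
  move=> i; have := congr1 (row i) hX; rewrite row_cycmap.
  move/eqP; rewrite subr_eq addrC -subr_eq subrr eq_sym scaler_eq0 invr_eq0.
  rewrite pnatr_eq0 /= projC_sym => /eqP /(projC_ker (hC i)) h.
  apply/eqP; rewrite -subr_eq0 -mulmxBr -linearB /= -[_ *m _^T]trmxK trmx_mul trmxK.
  by rewrite h trmx0.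
move=> i j; apply: trmx_inj; exact: (wc key).
Qed.

Lemma const_fixed (X : 'M[R]_(m, n)) : (forall i j, row i X = row j X) -> cycmap C X = X.
Proof.
move=> h; apply/row_matrixP => i.
by rewrite row_cycmap (h (ord_pred i) i) subrr mul0mx scaler0 subr0.
Qed.

End Cyc.

Unset Implicit Arguments. Set Strict Implicit.

Theorem lemma12 (R : realFieldType) (m n : nat) (r : 'I_m -> nat)
  (C : forall i, 'M[R]_(r i, n)) :
  (2 <= m)%N ->
  (forall i, row_free (C i)) ->
  well_configured C ->
  mup 1 (char_poly (cycM C)) = n /\ \rank (eigenspace (cycM C) 1) = n.
Proof.
move=> hm hC wc.
have hm0 : (0 < m)%N by apply: leq_trans hm.
pose i0 : 'I_m := Ordinal hm0.
set T := lin1_mx (cycf C).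
have eM : cycM C = T^T by [].
pose L : 'M[R]_(n, m * n) :=
  lin1_mx (fun v : 'rV[R]_n => mxvec (const_mx 1 *m v : 'M_(m, n))).
have Llin : linear (fun v : 'rV[R]_n => mxvec (const_mx 1 *m v : 'M_(m, n))).
  by move=> a u v; rewrite mulmxDr -scalemxAr linearP.
have uL : forall v, v *m L = mxvec (const_mx 1 *m v : 'M_(m, n)) := lin1P Llin.
have rowc : forall (v : 'rV[R]_n) i, row i (const_mx 1 *m v : 'M_(m, n)) = v.
  by move=> v i; apply/rowP => k; rewrite !mxE big_ord1 mxE mul1r.
have H1 : \rank (kermx (T - 1%:M)) = n.
  have e : (kermx (T - 1%:M) == L)%MS.
    apply/andP; split.
    - apply/row_subP => i; set u := row i _.
      have hu : u *m T = u.
        apply/eqP; rewrite -subr_eq0 -{2}(mulmx1 u) -mulmxBr.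
        by rewrite /u -row_mul mulmx_ker row0.
      have hX : cycmap C (vec_mx u) = vec_mx u.
        by have := congr1 vec_mx hu; rewrite uT /cycf mxvecK.
      have hr := fixed_rows hC wc hX.
      have -> : u = row i0 (vec_mx u) *m L.
        rewrite uL -[LHS]vec_mxK; congr mxvec; apply/row_matrixP => j.
        by rewrite rowc (hr j i0).
      exact: submxMl.
    - apply/sub_kermxP; apply/row_matrixP => j.
      rewrite row0 row_mul mulmxBr mulmx1 uT.
      have -> : row j L = row j 1%:M *m L by rewrite -row_mul mul1mx.
      rewrite uL /cycf mxvecK const_fixed ?subrr //.
      by move=> a b; rewrite !rowc.
  rewrite (eqmx_rank e).
  have rfL : row_free L.
    apply: row_freeI => v; rewrite uL => /eqP; rewrite mxvec_eq0 => /eqP h.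
    by rewrite -(rowc v i0) h row0.
  exact/eqP.
have H2 : forall u : 'rV_(m * n),
    u *m (T - 1%:M) *m (T - 1%:M) = 0 -> u *m (T - 1%:M) = 0.
  move=> u; set y := u *m (T - 1%:M) => hy.
  have hyT : y *m T = y.
    by apply/eqP; rewrite -subr_eq0 -{2}(mulmx1 y) -mulmxBr hy.
  have fy : cycmap C (vec_mx y) = vec_mx y.
    by have := congr1 vec_mx hyT; rewrite uT /cycf mxvecK.
  have hr := fixed_rows hC wc fy.
  set X := vec_mx u.
  pose d i := row i X - row (ord_pred i) X.
  have rowY : forall i, row i (vec_mx y) = - (2^-1 *: (d i *m projC (C i))).
    move=> i; rewrite /y mulmxBr mulmx1 uT /cycf linearB /= mxvecK -/X.
    by rewrite linearB /= row_cycmap projC_sym // addrAC subrr add0r.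
  set c := row i0 (vec_mx y).
  have hcP : forall i, c *m projC (C i) = c.
    move=> i; rewrite /c (hr i0 i) rowY mulNmx -scalemxAl -mulmxA projC_idem //.
  have hcc : forall i, c *m c^T = - (2^-1 *: (d i *m c^T)).
    move=> i; rewrite {1}/c (hr i0 i) rowY mulNmx -scalemxAl -mulmxA.
    have Pc : projC (C i) *m c^T = c^T by rewrite -{1}(projC_sym (C i)) -trmx_mul hcP.
    by rewrite Pc.
  have sumd : \sum_i d i = 0.
    rewrite /d sumrB (reindex_inj (@ord_pred_inj m)) /=.
    by rewrite subrr.
  have : \sum_(i < m) c *m c^T = 0.
    rewrite (eq_bigr _ (fun i _ => hcc i)) sumrN -scaler_sumr -mulmx_suml sumd.
    by rewrite mul0mx scaler0 oppr0.
  rewrite sumr_const card_ord -scaler_nat => /eqP; rewrite scaler_eq0 pnatr_eq0.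
  rewrite eqn0Ngt hm0 /= => /eqP /sq_eq0 c0.
  rewrite -[y]vec_mxK; have -> : vec_mx y = 0.
    by apply/row_matrixP => i; rewrite (hr i i0) -/c c0 row0.
  by rewrite linear0.
split.
  by rewrite eM char_poly_tr; exact: (genG H1 H2).
rewrite /eigenspace eM mxrank_ker.
have -> : T^T - 1%:M = (T - 1%:M)^T by rewrite (raddfB (@trmx _ _ _)) /= tr_scalar_mx.
by rewrite mxrank_tr -mxrank_ker H1.
Qed.
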